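(* Let $\lambda,\mu,\theta>0$, $\alpha\in\mathbb{R}$ and $\hat\lambda,\hat\mu,\hat\theta,\hat\alpha\in\mathbb{R}$, and let $\epsilon$ be a small parameter. Consider the delay differential system, with delay $\Delta>0$, $$\dot q_1(t) = (\lambda+\epsilon\hat\lambda)\,\frac{\exp\big(-(\theta+\epsilon\hat\theta)q_1(t-\Delta)+(\alpha+\epsilon\hat\alpha)\big)}{\exp\big(-(\theta+\epsilon\hat\theta)q_1(t-\Delta)+(\alpha+\epsilon\hat\alpha)\big)+\exp\big(-\theta q_2(t-\Delta)+\alpha\big)} - (\mu+\epsilon\hat\mu)\,q_1(t),$$ $$\dot q_2(t) = \lambda\,\frac{\exp\big(-\theta q_2(t-\Delta)+\alpha\big)}{\exp\big(-(\theta+\epsilon\hat\theta)q_1(t-\Delta)+(\alpha+\epsilon\hat\alpha)\big)+\exp\big(-\theta q_2(t-\Delta)+\alpha\big)} - \mu\,q_2(t).$$ Then this system has an approximate (up to order $\epsilon^2$) equilibrium point (constant solution) $$(q_1^*,q_2^* )=\Big(\frac{\lambda}{2\mu}+a\epsilon+O(\epsilon^2),\ \frac{\lambda}{2\mu}+b\epsilon+O(\epsilon^2)\Big),$$ where $$a=\frac{\lambda\theta+4\mu}{4\mu(\lambda\theta+2\mu)}\hat\lambda-\frac{\lambda(\lambda\theta+4\mu)}{4\mu^2(\lambda\theta+2\mu)}\hat\mu-\frac{\lambda^2}{4\mu(\lambda\theta+2\mu)}\hat\theta+\frac{\lambda}{2(\lambda\theta+2\mu)}\hat\alpha,$$ $$b=\frac{\lambda\theta}{4\mu(\lambda\theta+2\mu)}\hat\lambda-\frac{\lambda^2\theta}{4\mu^2(\lambda\theta+2\mu)}\hat\mu+\frac{\lambda^2}{4\mu(\lambda\theta+2\mu)}\hat\theta-\frac{\lambda}{2(\lambda\theta+2\mu)}\hat\alpha;$$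 that is, substituting these constants into the right-hand sides makes them vanish up to $O(\epsilon^2)$.
   Context: $q_1(t),q_2(t)$ are fluid queue lengths of two infinite-server queues; $\lambda$ is the arrival rate, $\mu$ the service rate, $\theta$ the customer sensitivity to queue length, $\alpha$ the preference parameter; the hatted quantities are perturbations applied (scaled by $\epsilon$) to the parameters of the first queue. Initial data are continuous functions on $[-\Delta,0]$. *)

(* Defs.v *)
From Stdlib Require Import Reals Lra.
Open Scope R_scope.

(* Right-hand side of the q1 equation, as a function of the delayed values
   q1d = q1(t-Delta), q2d = q2(t-Delta) and the current value q1t = q1(t). *)
Definition rhs1 (lam mu th al lh mh thh alh eps : R) (q1d q2d q1t : R) : R :=
  let e1 := exp (- (th + eps * thh) * q1d + (al + eps * alh)) in
  let e2 := exp (- th * q2d + al) in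
  (lam + eps * lh) * (e1 / (e1 + e2)) - (mu + eps * mh) * q1t.

Definition rhs2 (lam mu th al lh mh thh alh eps : R) (q1d q2d q2t : R) : R :=
  let e1 := exp (- (th + eps * thh) * q1d + (al + eps * alh)) in
  let e2 := exp (- th * q2d + al) in
  lam * (e2 / (e1 + e2)) - mu * q2t.

Definition coef_a (lam mu th lh mh thh alh : R) : R :=
  (lam * th + 4 * mu) / (4 * mu * (lam * th + 2 * mu)) * lh
  - lam * (lam * th + 4 * mu) / (4 * mu ^ 2 * (lam * th + 2 * mu)) * mh
  - lam ^ 2 / (4 * mu * (lam * th + 2 * mu)) * thh
  + lam / (2 * (lam * th + 2 * mu)) * alh.

Definition coef_b (lam mu th lh mh thh alh : R) : R :=
  lam * th / (4 * mu * (lam * th + 2 * mu)) * lh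
  - lam ^ 2 * th / (4 * mu ^ 2 * (lam * th + 2 * mu)) * mh
  + lam ^ 2 / (4 * mu * (lam * th + 2 * mu)) * thh
  - lam / (2 * (lam * th + 2 * mu)) * alh.

Definition bigO_eps2 (f : R -> R) : Prop :=
  exists C delta, 0 < delta /\
    forall eps, Rabs eps < delta -> Rabs (f eps) <= C * eps ^ 2.

(* Main.v *)
Require Import Defs.
From Stdlib Require Import Reals Lra Psatz.
Open Scope R_scope.
Definition Rsig (x : R) := 1 / (1 + exp x) - 1/2 + x/4.
Lemma sig_bound x : Rabs x <= 1/2 -> Rabs (Rsig x) <= 2 * x^2.
Proof.
  intros Hx. unfold Rsig.
  assert (H1 := exp_ineq1_le x). assert (H2 := exp_ineq1_le (-x)).
  assert (Hp := exp_pos x).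
  assert (Hm : exp x * exp (-x) = 1) by (rewrite <- exp_plus; replace (x + - x) with 0 by ring; apply exp_0).
  set (e := exp x) in *. set (f := exp (-x)) in *.
  assert (Hxx : -1/2 <= x <= 1/2) by (revert Hx; unfold Rabs; destruct (Rcase_abs x); lra) .
  assert (HE : e - 1 - x <= 2 * x^2) by nra.
  replace (1 / (1 + e) - 1/2 + x/4) with ((-2*(e-1-x) + x*(e-1-x) + x^2)/(4*(1+e))) by (field; lra).
  assert (Hi : / (4*(1+e)) * (4*(1+e)) = 1) by (field; lra).
  assert (Hip : 0 < / (4*(1+e))) by (apply Rinv_0_lt_compat; lra).
  unfold Rdiv. set (i := / (4*(1+e))) in *.
  assert (Hn : Rabs (-2*(e-1-x) + x*(e-1-x) + x^2) <= 8*x^2*(1+e)).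
  { apply Rabs_le. split; nra. }
  rewrite Rabs_mult, (Rabs_pos_eq i) by lra.
  nra.
Qed.
Lemma gen (f : R -> R) p2 p3 L0 L1 d1 d2 :
 (forall eps, f eps = eps^2*(p2+p3*eps) + (L0+eps*L1) * Rsig (eps*d1+eps^2*d2)) -> bigO_eps2 f.
Proof.
  intros Hf.
  set (K := Rabs d1 + Rabs d2).
  assert (HK : 0 <= K) by (unfold K; pose proof (Rabs_pos d1); pose proof (Rabs_pos d2); lra).
  exists (Rabs p2 + Rabs p3 + (Rabs L0 + Rabs L1) * (2 * K^2)).
  exists (Rmin 1 (1 / (2 * (K+1)))).
  split. { apply Rmin_pos; [lra|]. apply Rdiv_lt_0_compat; lra. }
  intros eps He.
  assert (He1 : Rabs eps < 1) by (eapply Rlt_le_trans; [exact He| apply Rmin_l]).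
  assert (He2 : Rabs eps < 1 / (2*(K+1))) by (eapply Rlt_le_trans; [exact He| apply Rmin_r]).
  assert (He3 : Rabs eps * (2*(K+1)) < 1).
  { apply (Rmult_lt_compat_r (2*(K+1))) in He2; [|lra]. 
    replace (1 / (2*(K+1)) * (2*(K+1))) with 1 in He2 by (field; lra). exact He2. }
  set (a := Rabs eps) in *.
  assert (Ha : 0 <= a) by apply Rabs_pos.
  assert (Hsq : eps^2 = a^2) by (unfold a; rewrite pow2_abs; reflexivity).
  rewrite Hf.
  set (x := eps*d1+eps^2*d2). rewrite Hsq.
  assert (Hx : Rabs x <= a * K).
  { unfold x. eapply Rle_trans; [apply Rabs_triang|].
    rewrite !Rabs_mult, <- RPow_abs. fold a. unfold K.
    pose proof (Rabs_pos d1); pose proof (Rabs_pos d2).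
    assert (a^2 * Rabs d2 <= a * Rabs d2) by (apply Rmult_le_compat_r; nra). nra. }
  assert (Hx2 : Rabs x <= 1/2) by nra.
  pose proof (sig_bound x Hx2) as Hs.
  assert (Hxx : x^2 <= a^2 * K^2).
  { rewrite <- pow2_abs.
    pose proof (Rabs_pos x). nra. }
  eapply Rle_trans; [apply Rabs_triang|].
  rewrite !Rabs_mult. rewrite (Rabs_pos_eq (a^2)) by (apply pow2_ge_0).
  assert (H1 : Rabs (p2 + p3*eps) <= Rabs p2 + Rabs p3).
  { eapply Rle_trans; [apply Rabs_triang|]. rewrite Rabs_mult. fold a.
    pose proof (Rabs_pos p3). nra. }
  assert (H2 : Rabs (L0 + eps*L1) <= Rabs L0 + Rabs L1).
  { eapply Rle_trans; [apply Rabs_triang|]. rewrite Rabs_mult. fold a.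
    pose proof (Rabs_pos L1). nra. }
  assert (H3 : Rabs (Rsig x) <= 2 * (a^2*K^2)) by lra.
  pose proof (Rabs_pos (L0 + eps*L1)). pose proof (Rabs_pos (Rsig x)).
  pose proof (Rabs_pos (p2 + p3*eps)).
  assert (Ha2 : 0 <= a^2) by apply pow2_ge_0.
  assert (Rabs (L0 + eps*L1) * Rabs (Rsig x) <= (Rabs L0 + Rabs L1) * (2 * (a^2*K^2))).
  { apply Rmult_le_compat; lra. }
  assert (a^2 * Rabs (p2 + p3*eps) <= a^2 * (Rabs p2 + Rabs p3)) by (apply Rmult_le_compat_l; lra).
  nra.
Qed.

Lemma frac1 u v : exp u / (exp u + exp v) = Rsig (v-u) + 1/2 - (v-u)/4.
Proof.
  unfold Rsig. replace (exp v) with (exp u * exp (v-u)) by (rewrite <- exp_plus; f_equal; ring).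
  pose proof (exp_pos u); pose proof (exp_pos (v-u)). field; nra.
Qed.

Lemma frac2 u v : exp v / (exp u + exp v) = Rsig (u-v) + 1/2 - (u-v)/4.
Proof.
  rewrite Rplus_comm. apply frac1.
Qed.

Theorem mainTheorem1 (lam mu th al lh mh thh alh Delta : R) :
  0 < lam -> 0 < mu -> 0 < th -> 0 < Delta ->
  let q1s := fun eps => lam / (2 * mu) + coef_a lam mu th lh mh thh alh * eps in
  let q2s := fun eps => lam / (2 * mu) + coef_b lam mu th lh mh thh alh * eps in
  bigO_eps2 (fun eps =>
    rhs1 lam mu th al lh mh thh alh eps (q1s eps) (q2s eps) (q1s eps)) /\
  bigO_eps2 (fun eps =>
    rhs2 lam mu th al lh mh thh alh eps (q1s eps) (q2s eps) (q2s eps)).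
Proof.
  intros Hl Hm Ht HD q1s q2s.
  set (c := lam / (2*mu)).
  set (A := coef_a lam mu th lh mh thh alh).
  set (B := coef_b lam mu th lh mh thh alh).
  set (d1 := th*(A-B) + thh*c - alh).
  set (d2 := thh*A).
  assert (Hne : lam*th + 2*mu <> 0) by nra.
  split.
  - apply (gen _ (-lh*d1/4 - lam*d2/4 - mh*A) (-lh*d2/4) lam lh d1 d2).
    intros eps. unfold rhs1, q1s, q2s. cbv zeta. rewrite frac1.
    match goal with |- context[Rsig ?z] => replace z with (eps*d1+eps^2*d2) by (unfold d1, d2, c, A, B, coef_a, coef_b; field; lra) end.
    unfold d1, d2, c, A, B, coef_a, coef_b. field. lra.
  - apply (gen _ (lam*d2/4) 0 lam 0 (-d1) (-d2)).
    intros eps. unfold rhs2, q1s, q2s. cbv zeta. rewrite frac2.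
    match goal with |- context[Rsig ?z] => replace z with (eps*(-d1)+eps^2*(-d2)) by (unfold d1, d2, c, A, B, coef_a, coef_b; field; lra) end.
    unfold d1, d2, c, A, B, coef_a, coef_b. field. lra.
Qed.
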